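(* Let $\eta\in(0,1)$ and $\epsilon>0$. There exists $N_0$ such that for every Sawtooth model with $n\ge N_0+4$ upper particles, every $2\le r\le n-N_0$ and every $y\in[0,1]$, $$\mathbb P\Big(\bigcup_{r\le i\le r+N_0}\{X_i<\eta\}\ \Big|\ Y_{r+N_0}=y\Big)\ge1-\epsilon.$$
   Context: A (type $--$) Sawtooth model with $n\ge1$ upper particles is specified by functions $f_1,g_1,\dots,f_n,g_n:[0,1]\to[0,\infty)$, each nondecreasing, $C^1$ and not identically zero. It is the probability space $[0,1]^{n+1}\times[0,1]^n$ with probability density at $(x_1,\dots,x_{n+1},y_1,\dots,y_n)$ equal to $\frac{1}{\mathcal V}\prod_{i=1}^n\mathbf 1_{\{x_i\le y_i\}}\mathbf 1_{\{x_{i+1}\le y_i\}}f_i(y_i-x_i)\,g_i(y_i-x_{i+1})$, $\mathcal V$ being the normalizing constant; lower particles $X_1,\dots,X_{n+1}$, upper particles $Y_1,\dots,Y_n$. Conditional probabilities given $Y_j=y$ are computed from the joint density. *)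

(* Defs.v *)
From Stdlib Require Import Reals Lra List Classical ClassicalEpsilon.
Import ListNotations.
Open Scope R_scope.

(* Total Riemann integral on [a,b]: the Riemann integral if f is Riemann
   integrable, 0 otherwise (RiemannInt does not depend on the proof). *)
Definition Rint (f : R -> R) (a b : R) : R :=
  match excluded_middle_informative
          (exists I, exists pr : Riemann_integrable f a b, RiemannInt pr = I) with
  | left h => proj1_sig (constructive_indefinite_description _ h)
  | right _ => 0
  end.

(* Iterated integral over [0,1]^k of F, where the integration variables are
   the coordinates 1..k of v : nat -> R (other coordinates are 0). *)
Fixpoint intcube (k : nat) (F : (nat -> R) -> R) : R :=
  match k with
  | O => F (fun _ => 0)
  | S k' => Rint (fun t => intcube k'
               (fun v => F (fun i => if Nat.eqb i k then t else v i))) 0 1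
  end.

Definition ind_le (a b : R) : R := if Rle_dec a b then 1 else 0.

Definition admissible (h : R -> R) : Prop :=
  (forall t, 0 <= t <= 1 -> 0 <= h t) /\
  (forall s t, 0 <= s -> s <= t -> t <= 1 -> h s <= h t) /\
  (exists dh : R -> R,
      (forall t, 0 <= t <= 1 -> derivable_pt_lim h t (dh t)) /\
      (forall t, 0 <= t <= 1 -> continuity_pt dh t)) /\
  (exists t, 0 <= t <= 1 /\ h t <> 0).

Definition sawtooth_fns (n : nat) (f g : nat -> R -> R) : Prop :=
  forall i, (1 <= i <= n)%nat -> admissible (f i) /\ admissible (g i).

Definition dens (n : nat) (f g : nat -> R -> R) (x y : nat -> R) : R :=
  fold_right Rmult 1
    (map (fun i => ind_le (x i) (y i) * ind_le (x (S i)) (y i)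
                   * f i (y i - x i) * g i (y i - x (S i)))
         (seq 1 n)).

Definition upd (w : nat -> R) (j : nat) (y : R) : nat -> R :=
  fun i => if Nat.eqb i j then y else w i.

(* Integral of A(x) * density with Y_j fixed to y, over all other variables
   (the coordinate w_j is a dummy variable, contributing a factor 1). *)
Definition cond_int (n : nat) (f g : nat -> R -> R) (j : nat) (y : R)
  (A : (nat -> R) -> R) : R :=
  intcube (n + 1) (fun x => intcube n (fun w => A x * dens n f g x (upd w j y))).

(* Marginal (unnormalized) density of Y_j at y. *)
Definition cond_den (n : nat) (f g : nat -> R -> R) (j : nat) (y : R) : R :=
  cond_int n f g j y (fun _ => 1).

(* P(event A on lower particles | Y_j = y), A given by its indicator. *)
Definition cond_prob (n : nat) (f g : nat -> R -> R) (j : nat) (y : R)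
  (A : (nat -> R) -> R) : R :=
  cond_int n f g j y A / cond_den n f g j y.

Definition some_below (eta : R) (r N0 : nat) (x : nat -> R) : R :=
  if existsb (fun i => if Rlt_dec (x i) eta then true else false)
             (seq r (S N0)) then 1 else 0.

(* Main.v *)
Require Import Defs.
From Stdlib Require Import Reals.
From Stdlib Require Import Lra Lia ZArith List Classical ClassicalEpsilon FunctionalExtensionality.
From Coquelicot Require Import Coquelicot.
From Stdlib Require Import RList Ranalysis RiemannInt_SF RiemannInt.
Require Import Defs.
Open Scope R_scope.

Fixpoint stepf (F : R -> R) (N : nat) (a h : R) (t : R) : R :=
  match N with
  | O => F a
  | S N' => if Rlt_dec t (a + h) then F a else stepf F N' (a + h) h t
  end.

Fixpoint sumF (F : R -> R) (N : nat) (a h : R) : R :=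
  match N with
  | O => 0
  | S N' => F a * h + sumF F N' (a + h) h
  end.

Definition const_open_step (g : R -> R) (a b c : R) (Hab : a <= b)
  (Hg : forall t, a < t < b -> g t = c) : IsStepFun g a b.
Proof.
  exists (cons a (cons b nil)). exists (cons c nil).
  unfold adapted_couple; repeat split.
  - unfold ordered_Rlist; intros; simpl in H; inversion H;
      [ simpl; assumption | lia ].
  - simpl; unfold Rmin; destruct (Rle_dec a b); lra.
  - simpl; unfold Rmax; destruct (Rle_dec a b); lra.
  - unfold constant_D_eq, open_interval; intros; simpl in H.
    inversion H; [ subst; simpl in *; apply Hg; auto | lia ].
Defined.

Lemma const_open_int g a b c Hab Hg :
  RiemannInt_SF (mkStepFun (const_open_step g a b c Hab Hg)) = c * (b - a).
Proof.
  unfold RiemannInt_SF, subdivision, subdivision_val; simpl.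
  destruct (Rle_dec a b); [ring | lra].
Qed.

Lemma ordered_mono l : ordered_Rlist l ->
  forall i j, (i <= j)%nat -> (j < length l)%nat -> pos_Rl l i <= pos_Rl l j.
Proof.
  intros Ho i j Hij. induction Hij; intros Hj.
  - lra.
  - apply Rle_trans with (pos_Rl l m). apply IHHij; lia.
    apply Ho. lia.
Qed.

Definition step_ext (g g' : R -> R) (a b : R) (Hab : a <= b) (pr : IsStepFun g a b)
  (He : forall t, a < t < b -> g' t = g t) : IsStepFun g' a b.
Proof.
  destruct pr as [l [lf Hl]]. exists l. exists lf.
  destruct Hl as (H1 & H2 & H3 & H4 & H5).
  repeat split; auto.
  intros i Hi. unfold constant_D_eq, open_interval in *. intros t Ht.
  rewrite He. apply (H5 i Hi t Ht).
  assert (Hr1 : Rmin a b = a) by (unfold Rmin; destruct (Rle_dec a b); lra).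
  assert (Hr2 : Rmax a b = b) by (unfold Rmax; destruct (Rle_dec a b); lra).
  assert (pos_Rl l 0 <= pos_Rl l i) by (apply ordered_mono; auto; lia).
  assert (pos_Rl l (S i) <= pos_Rl l (pred (length l))) by (apply ordered_mono; auto; lia).
  lra.
Defined.

Lemma step_ext_int g g' a b Hab pr He :
  RiemannInt_SF (mkStepFun (step_ext g g' a b Hab pr He)) = RiemannInt_SF (mkStepFun pr).
Proof.
  destruct pr as [l [lf Hl]]. unfold RiemannInt_SF, subdivision, subdivision_val; simpl.
  destruct Hl as (H1 & H2 & H3 & H4 & H5). simpl. reflexivity.
Qed.

Lemma step_main (F : R -> R) (h : R) (Hh : 0 < h) : forall N a b,
  b = a + INR N * h ->
  { pr : IsStepFun (stepf F N a h) a b | RiemannInt_SF (mkStepFun pr) = sumF F N a h }.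
Proof.
  induction N as [|N IH]; intros a b Hb.
  - simpl in Hb. assert (Hab : a <= b) by lra.
    unshelve eexists (const_open_step _ a b (F a) Hab _).
    + intros; lra.
    + rewrite const_open_int. simpl. rewrite Hb; ring.
  - assert (Hab : a <= a + h) by lra.
    assert (Hg : forall t, a < t < a + h -> stepf F (S N) a h t = F a).
    { intros t Ht; simpl; destruct (Rlt_dec t (a + h)); lra. }
    pose (pr1 := const_open_step _ a (a + h) (F a) Hab Hg).
    assert (Hb' : b = a + h + INR N * h) by (rewrite Hb, S_INR; ring).
    destruct (IH (a + h) b Hb') as [pr2' Hpr2'].
    assert (Hab2 : a + h <= b) by (rewrite Hb'; pose proof (pos_INR N); nra).
    assert (He : forall t, a + h < t < b -> stepf F (S N) a h t = stepf F N (a + h) h t).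
    { intros t Ht; simpl; destruct (Rlt_dec t (a + h)); [lra | reflexivity]. }
    pose (pr2 := step_ext _ _ _ _ Hab2 pr2' He).
    exists (StepFun_P46 pr1 pr2).
    rewrite <- (StepFun_P43 pr1 pr2 (StepFun_P46 pr1 pr2)).
    unfold pr1, pr2. rewrite const_open_int, step_ext_int, Hpr2'. simpl. ring.
Qed.

Section Mono.
Variable f : R -> R.
Hypothesis Hf : forall s t, 0 <= s -> s <= t -> t <= 1 -> f s <= f t.
Variable h : R.
Hypothesis Hh : 0 < h.
Definition Df (s : R) := f (Rmin (s + h) 1) - f s.

Lemma stepf_bound : forall N a, 0 <= a -> a + INR N * h <= 1 ->
  forall t, a <= t <= a + INR N * h ->
  stepf f N a h t <= f t <= stepf f N a h t + stepf Df N a h t.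
Proof.
  induction N as [|N IH]; intros a Ha Hb t Ht.
  - simpl in *. unfold Df.
    assert (t = a) by lra. subst.
    assert (f a <= f (Rmin (a + h) 1)).
    { apply Hf; auto. unfold Rmin; destruct (Rle_dec (a+h) 1); lra.
      unfold Rmin; destruct (Rle_dec (a+h) 1); lra. }
    lra.
  - rewrite S_INR in Hb, Ht. pose proof (pos_INR N).
    simpl. destruct (Rlt_dec t (a + h)).
    + unfold Df. assert (Hm : Rmin (a + h) 1 = a + h).
      { unfold Rmin; destruct (Rle_dec (a+h) 1); nra. }
      rewrite Hm.
      assert (f a <= f t) by (apply Hf; lra).
      assert (f t <= f (a + h)) by (apply Hf; nra).
      lra.
    + apply IH; nra.
Qed.

Lemma sum_tele : forall N a, 0 <= a -> a + INR N * h <= 1 ->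
  sumF Df N a h = h * (f (a + INR N * h) - f a).
Proof.
  induction N as [|N IH]; intros a Ha Hb.
  - simpl. rewrite Rmult_0_l, Rplus_0_r. ring.
  - rewrite S_INR in Hb. pose proof (pos_INR N). simpl sumF.
    rewrite IH by nra. unfold Df.
    assert (Hm : Rmin (a + h) 1 = a + h).
    { unfold Rmin; destruct (Rle_dec (a+h) 1); nra. }
    rewrite Hm.
    replace (a + h + INR N * h) with (a + INR (S N) * h) by (rewrite S_INR; ring).
    ring.
Qed.
End Mono.

Lemma mono_integrable (f : R -> R) :
  (forall s t, 0 <= s -> s <= t -> t <= 1 -> f s <= f t) -> Riemann_integrable f 0 1.
Proof.
  intros Hf eps.
  assert (Hex : exists n : nat, (f 1 - f 0) / eps < INR n).
  { destruct (archimed ((f 1 - f 0) / eps)) as [H1 _].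
    destruct (Rle_dec ((f 1 - f 0)/eps) 0).
    - exists 1%nat. simpl. lra.
    - exists (Z.to_nat (up ((f 1 - f 0) / eps))).
      rewrite INR_IZR_INZ. rewrite Z2Nat.id. lra.
      apply le_IZR. lra. }
  apply constructive_indefinite_description in Hex. destruct Hex as [m Hm].
  set (n := S m). set (h := 1 / INR n).
  assert (Hn : 0 < INR n) by (unfold n; rewrite S_INR; pose proof (pos_INR m); lra).
  assert (Hh : 0 < h) by (unfold h; apply Rdiv_lt_0_compat; lra).
  assert (Hnh : 0 + INR n * h = 1) by (unfold h; field; lra).
  destruct (step_main f h Hh n 0 1 (eq_sym Hnh)) as [pr1 _].
  destruct (step_main (Df f h) h Hh n 0 1 (eq_sym Hnh)) as [pr2 Hi2].
  exists (mkStepFun pr1). exists (mkStepFun pr2). split.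
  - intros t Ht. change (Rabs (f t - stepf f n 0 h t) <= stepf (Df f h) n 0 h t).
    assert (Ht' : 0 <= t <= 0 + INR n * h).
    { rewrite Hnh. unfold Rmin, Rmax in Ht; destruct (Rle_dec 0 1); lra. }
    pose proof (stepf_bound f Hf h Hh n 0 (Rle_refl 0) (Req_le _ _ Hnh) t Ht').
    rewrite Rabs_right; lra.
  - rewrite Hi2, sum_tele; auto; try lra. rewrite Hnh.
    assert (f 0 <= f 1) by (apply Hf; lra).
    rewrite Rabs_right by (apply Rle_ge, Rmult_le_pos; lra).
    unfold h.
    assert (INR m < INR n) by (unfold n; rewrite S_INR; lra).
    destruct (Rle_dec (f 1 - f 0) 0).
    + assert (f 1 - f 0 = 0) by lra. rewrite H1. rewrite Rmult_0_r. destruct eps; simpl; lra.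
    + apply Rmult_lt_reg_l with (INR n); auto.
      replace (INR n * (1 / INR n * (f 1 - f 0))) with (f 1 - f 0) by (field; lra).
      destruct eps as [e He]; simpl in *.
      apply Rmult_lt_compat_r with (r := e) in Hm; auto.
      unfold Rdiv in Hm. rewrite Rmult_assoc, Rinv_l, Rmult_1_r in Hm; [|lra]. unfold n in *. nra.
Qed.

Lemma mono_ex (f : R -> R) :
  (forall s t, 0 <= s -> s <= t -> t <= 1 -> f s <= f t) -> ex_RInt f 0 1.
Proof. intros; apply ex_RInt_Reals_1, mono_integrable; auto. Qed.

Lemma anti_ex (f : R -> R) :
  (forall s t, 0 <= s -> s <= t -> t <= 1 -> f t <= f s) -> ex_RInt f 0 1.
Proof.
  intros Hf. apply ex_RInt_Reals_1.
  apply Riemann_integrable_ext with (fun x => - - f x).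
  intros; ring.
  apply Riemann_integrable_Ropp, mono_integrable.
  intros s t H1 H2 H3; specialize (Hf s t H1 H2 H3); lra.
Qed.

Lemma Rint_RInt f : ex_RInt f 0 1 -> Rint f 0 1 = RInt f 0 1.
Proof.
  intros H. unfold Rint.
  destruct (excluded_middle_informative _) as [e|e].
  - destruct (constructive_indefinite_description _ e) as [I [pr HI]]. simpl.
    rewrite <- HI. symmetry. apply RInt_Reals.
  - exfalso. apply e. exists (RiemannInt (ex_RInt_Reals_0 _ _ _ H)).
    exists (ex_RInt_Reals_0 _ _ _ H). reflexivity.
Qed.

Lemma Rint_le f g : ex_RInt f 0 1 -> ex_RInt g 0 1 ->
  (forall t, 0 <= t <= 1 -> f t <= g t) -> Rint f 0 1 <= Rint g 0 1.
Proof.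
  intros Hf Hg H. rewrite !Rint_RInt by auto.
  apply RInt_le; auto. lra. intros; apply H; lra.
Qed.

Lemma Rint_zero : Rint (fun _ => 0) 0 1 = 0.
Proof.
  rewrite Rint_RInt by apply ex_RInt_const.
  rewrite RInt_const. unfold scal; simpl; unfold mult; simpl. ring.
Qed.

Lemma ex_lin f g a b : ex_RInt f 0 1 -> ex_RInt g 0 1 ->
  ex_RInt (fun t => a * f t + b * g t) 0 1.
Proof.
  intros Hf Hg.
  apply (ex_RInt_plus (fun t => scal a (f t)) (fun t => scal b (g t)));
    apply ex_RInt_scal; auto.
Qed.

Lemma Rint_lin f g a b : ex_RInt f 0 1 -> ex_RInt g 0 1 ->
  Rint (fun t => a * f t + b * g t) 0 1 = a * Rint f 0 1 + b * Rint g 0 1.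
Proof.
  intros Hf Hg.
  assert (Hs : ex_RInt (fun t => a * f t + b * g t) 0 1).
  { apply (ex_RInt_plus (fun t => scal a (f t)) (fun t => scal b (g t)));
    apply ex_RInt_scal; auto. }
  rewrite !Rint_RInt by auto.
  rewrite (RInt_plus (fun t => scal a (f t)) (fun t => scal b (g t))) by (apply ex_RInt_scal; auto).
  assert (E1 : RInt (fun t => scal a (f t)) 0 1 = a * RInt f 0 1) by (apply (RInt_scal f 0 1 a Hf)).
  assert (E2 : RInt (fun t => scal b (g t)) 0 1 = b * RInt g 0 1) by (apply (RInt_scal g 0 1 b Hg)).
  rewrite E1, E2. reflexivity.
Qed.

Lemma exC1 (f:R->R) a b c : a <= b <= c -> ex_RInt f a c -> ex_RInt f a b.
Proof. exact (@ex_RInt_Chasles_1 R_CompleteNormedModule f a b c). Qed.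
Lemma exC2 (f:R->R) a b c : a <= b <= c -> ex_RInt f a c -> ex_RInt f b c.
Proof. exact (@ex_RInt_Chasles_2 R_CompleteNormedModule f a b c). Qed.
Lemma exC (f:R->R) a b c : ex_RInt f a b -> ex_RInt f b c -> ex_RInt f a c.
Proof. exact (@ex_RInt_Chasles R_CompleteNormedModule f a b c). Qed.
Lemma RC (f:R->R) a b c : ex_RInt f a b -> ex_RInt f b c -> RInt f a b + RInt f b c = RInt f a c.
Proof. exact (@RInt_Chasles R_CompleteNormedModule f a b c). Qed.
Lemma exE (f g:R->R) a b : (forall x, Rmin a b < x < Rmax a b -> f x = g x) -> ex_RInt f a b -> ex_RInt g a b.
Proof. exact (@ex_RInt_ext R_NormedModule f g a b). Qed.
Lemma RE (f g:R->R) a b : (forall x, Rmin a b < x < Rmax a b -> f x = g x) -> RInt f a b = RInt g a b.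
Proof. exact (@RInt_ext R_CompleteNormedModule f g a b). Qed.
Lemma exK (c a b : R) : ex_RInt (fun _ => c) a b.
Proof. exact (@ex_RInt_const R_NormedModule a b c). Qed.
Lemma RK (c a b : R) : RInt (fun _ => c) a b = (b - a) * c.
Proof. exact (@RInt_const R_CompleteNormedModule a b c). Qed.

Lemma key1d (Phi : R -> R) (eta : R) : 0 < eta < 1 ->
  (forall s t, 0 <= s -> s <= t -> t <= 1 -> Phi t <= Phi s) ->
  (forall t, 0 <= t <= 1 -> 0 <= Phi t) ->
  eta * Rint Phi 0 1 <= Rint (fun t => if Rlt_dec t eta then Phi t else 0) 0 1.
Proof.
  intros He Hm Hp.
  set (Psi := fun t => if Rlt_dec t eta then Phi t else 0).
  assert (HP : ex_RInt Phi 0 1) by (apply anti_ex; auto).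
  assert (HP1 : ex_RInt Phi 0 eta) by (apply exC1 with 1; auto; lra).
  assert (HP2 : ex_RInt Phi eta 1) by (apply exC2 with 0; auto; lra).
  assert (Hmin1 : Rmin 0 eta = 0) by (unfold Rmin; destruct Rle_dec; lra).
  assert (Hmax1 : Rmax 0 eta = eta) by (unfold Rmax; destruct Rle_dec; lra).
  assert (Hmin2 : Rmin eta 1 = eta) by (unfold Rmin; destruct Rle_dec; lra).
  assert (Hmax2 : Rmax eta 1 = 1) by (unfold Rmax; destruct Rle_dec; lra).
  assert (E1 : forall x, Rmin 0 eta < x < Rmax 0 eta -> Phi x = Psi x).
  { intros x Hx; unfold Psi; destruct Rlt_dec; lra. }
  assert (E2 : forall x, Rmin eta 1 < x < Rmax eta 1 -> (fun _ => 0) x = Psi x).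
  { intros x Hx; unfold Psi; destruct Rlt_dec; lra. }
  assert (HQ1 : ex_RInt Psi 0 eta) by (eapply exE; eauto).
  assert (HQ2 : ex_RInt Psi eta 1) by (eapply exE; [exact E2| apply exK]).
  assert (HQ : ex_RInt Psi 0 1) by (eapply exC; eauto).
  rewrite !Rint_RInt by auto.
  rewrite <- (RC Phi 0 eta 1) by auto.
  rewrite <- (RC Psi 0 eta 1) by auto.
  rewrite <- (RE _ _ _ _ E1). rewrite <- (RE _ _ _ _ E2).
  rewrite RK.
  set (P := Phi eta).
  assert (I1 : RInt (fun _ => P) 0 eta <= RInt Phi 0 eta).
  { apply RInt_le; auto. lra. apply exK. intros; apply Hm; lra. }
  assert (I2 : RInt Phi eta 1 <= RInt (fun _ => P) eta 1).
  { apply RInt_le; auto. lra. apply exK. intros; apply Hm; lra. }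
  rewrite RK in I1, I2.
  set (A := RInt Phi 0 eta) in *. set (B := RInt Phi eta 1) in *.
  assert (eta * B <= eta * ((1 - eta) * P)) by (apply Rmult_le_compat_l; lra).
  assert ((1 - eta) * ((eta - 0) * P) <= (1 - eta) * A) by (apply Rmult_le_compat_l; lra).
  nra.
Qed.

Definition box (v : nat -> R) := forall i, 0 <= v i <= 1.
Definition ord (d : bool) (a b : R) := if d then a <= b else b <= a.
Definition le_d (d : nat -> bool) (u v : nat -> R) := forall i, ord (d i) (u i) (v i).
Definition Mono (d : nat -> bool) (F : (nat -> R) -> R) :=
  forall u v, box u -> box v -> le_d d u v -> F u <= F v.
Definition upk (v : nat -> R) (k : nat) (t : R) : nat -> R :=
  fun i => if Nat.eqb i k then t else v i.

Lemma intcube_S k F :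
  intcube (S k) F = Rint (fun t => intcube k (fun v => F (upk v (S k) t))) 0 1.
Proof. reflexivity. Qed.

Lemma box_upk v k t : box v -> 0 <= t <= 1 -> box (upk v k t).
Proof. intros Hv Ht i; unfold upk; destruct (Nat.eqb i k); auto. Qed.

Lemma ord_refl b x : ord b x x.
Proof. destruct b; simpl; lra. Qed.

Lemma Mono_upk d F k t : Mono d F -> 0 <= t <= 1 -> Mono d (fun v => F (upk v k t)).
Proof.
  intros HF Ht u v Hu Hv Huv. apply HF; try apply box_upk; auto.
  intro i; unfold upk; destruct (Nat.eqb i k); [apply ord_refl | apply Huv].
Qed.

Lemma le_upk d F k s t : Mono d F -> 0 <= s <= 1 -> 0 <= t <= 1 -> ord (d k) s t ->
  forall v, box v -> F (upk v k s) <= F (upk v k t).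
Proof.
  intros HF Hs Ht Hst v Hv. apply HF; try apply box_upk; auto.
  intro i; unfold upk. destruct (Nat.eqb i k) eqn:E; [apply Nat.eqb_eq in E; subst; auto | apply ord_refl].
Qed.

Definition LeProp (k : nat) := forall d F G, Mono d F -> Mono d G ->
  (forall v, box v -> F v <= G v) -> intcube k F <= intcube k G.

Lemma int_from_le k : LeProp k -> forall d F, Mono d F ->
  ex_RInt (fun t => intcube k (fun v => F (upk v (S k) t))) 0 1.
Proof.
  intros HL d F HF. destruct (d (S k)) eqn:Ed.
  - apply mono_ex. intros s t H1 H2 H3. apply (HL d); try (apply Mono_upk; auto; lra).
    intros; apply (le_upk d); auto; try lra. rewrite Ed; simpl; auto.
  - apply anti_ex. intros s t H1 H2 H3. apply (HL d); try (apply Mono_upk; auto; lra).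
    intros; apply (le_upk d); auto; try lra. rewrite Ed; simpl; auto.
Qed.

Lemma intcube_le : forall k, LeProp k.
Proof.
  induction k as [|k IH]; intros d F G HF HG H.
  - simpl. apply H. intro; lra.
  - rewrite !intcube_S. apply Rint_le; try (apply (int_from_le k IH d); auto).
    intros t Ht. apply (IH d); try (apply Mono_upk; auto).
    intros v Hv; apply H, box_upk; auto.
Qed.

Lemma intcube_int k d F : Mono d F ->
  ex_RInt (fun t => intcube k (fun v => F (upk v (S k) t))) 0 1.
Proof. apply int_from_le, intcube_le. Qed.

Lemma intcube_zero : forall k, intcube k (fun _ => 0) = 0.
Proof.
  induction k as [|k IH]; [reflexivity|].
  rewrite intcube_S. rewrite IH. apply Rint_zero.
Qed.

Lemma Mono_zero d : Mono d (fun _ => 0).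
Proof. intros u v _ _ _; lra. Qed.

Lemma intcube_nonneg k d F : Mono d F -> (forall v, box v -> 0 <= F v) -> 0 <= intcube k F.
Proof.
  intros HF H. rewrite <- (intcube_zero k). apply (intcube_le k d); auto. apply Mono_zero.
Qed.

Lemma intcube_ext k F G : (forall v, F v = G v) -> intcube k F = intcube k G.
Proof. intros H. f_equal. apply functional_extensionality; auto. Qed.

Definition AL (eta : R) (L : list nat) (v : nat -> R) : R :=
  if existsb (fun i => if Rlt_dec (v i) eta then true else false) L then 1 else 0.

Definition pb eta (v : nat -> R) := fun i => if Rlt_dec (v i) eta then true else false.

Lemma AL_notin eta L k v t : ~ In k L -> AL eta L (upk v k t) = AL eta L v.
Proof.
  intros H. unfold AL.
  replace (existsb (fun i => if Rlt_dec (upk v k t i) eta then true else false) L) with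
    (existsb (fun i => if Rlt_dec (v i) eta then true else false) L); [reflexivity|].
  induction L as [|i L IH]; simpl; auto.
  simpl in H. rewrite IH by tauto. unfold upk.
  destruct (Nat.eqb i k) eqn:E; auto. apply Nat.eqb_eq in E; subst; tauto.
Qed.

Lemma AL_in_lt eta L k v t : In k L -> t < eta -> AL eta L (upk v k t) = 1.
Proof.
  intros H Ht. unfold AL.
  assert (existsb (fun i => if Rlt_dec (upk v k t i) eta then true else false) L = true).
  { apply existsb_exists. exists k. split; auto. unfold upk. rewrite Nat.eqb_refl.
    destruct Rlt_dec; auto. }
  rewrite H0; auto.
Qed.

Lemma AL_in_ge eta L k v t : ~ t < eta ->
  AL eta L (upk v k t) = AL eta (filter (fun i => negb (Nat.eqb i k)) L) v.
Proof.
  intros Ht. unfold AL.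
  replace (existsb (fun i => if Rlt_dec (upk v k t i) eta then true else false) L) with
   (existsb (fun i => if Rlt_dec (v i) eta then true else false) (filter (fun i => negb (Nat.eqb i k)) L)); [reflexivity|].
  induction L as [|i L IH]; [reflexivity|].
  cbn [existsb filter].
  destruct (Nat.eq_dec i k) as [->|Hne].
  - rewrite Nat.eqb_refl. cbn [negb].
    assert (Hx: upk v k t k = t) by (unfold upk; rewrite Nat.eqb_refl; auto). rewrite Hx.
    destruct Rlt_dec; [tauto|]. cbn [orb]. apply IH.
  - assert (E: Nat.eqb i k = false) by (apply Nat.eqb_neq; auto). rewrite E. cbn [negb existsb].
    assert (Hx: upk v k t i = v i) by (unfold upk; rewrite E; auto). rewrite Hx, IH. reflexivity.
Qed.

Lemma filter_all k L : ~ In k L -> filter (fun i => negb (Nat.eqb i k)) L = L.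
Proof.
  induction L as [|i L IH]; simpl; intros H; auto.
  destruct (Nat.eqb i k) eqn:E. apply Nat.eqb_eq in E; subst; tauto.
  simpl; rewrite IH; tauto.
Qed.

Lemma length_filter k L : NoDup L -> In k L ->
  length L = S (length (filter (fun i => negb (Nat.eqb i k)) L)).
Proof.
  induction L as [|i L IH]; simpl; intros Hd H; [tauto|].
  inversion Hd; subst.
  destruct (Nat.eqb i k) eqn:E; simpl.
  - apply Nat.eqb_eq in E; subst. rewrite filter_all; auto.
  - destruct H as [H|H]. subst; rewrite Nat.eqb_refl in E; discriminate.
    rewrite IH; auto.
Qed.

Lemma AL_range eta L v : 0 <= AL eta L v <= 1.
Proof. unfold AL; destruct existsb; lra. Qed.

Lemma AL_mono eta L u v : le_d (fun _ => false) u v -> AL eta L u <= AL eta L v.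
Proof.
  intros H. unfold AL.
  destruct (existsb (fun i => if Rlt_dec (u i) eta then true else false) L) eqn:E1;
    [|destruct (existsb (fun i => if Rlt_dec (v i) eta then true else false) L); lra].
  apply existsb_exists in E1. destruct E1 as [i [Hi Hu]].
  assert (existsb (fun i => if Rlt_dec (v i) eta then true else false) L = true).
  { apply existsb_exists; exists i; split; auto.
    specialize (H i); simpl in H. destruct (Rlt_dec (u i) eta); [|discriminate].
    destruct Rlt_dec; auto; lra. }
  rewrite H0; lra.
Qed.

Lemma Mono_AL eta L F : Mono (fun _ => false) F -> (forall v, box v -> 0 <= F v) ->
  Mono (fun _ => false) (fun v => AL eta L v * F v).
Proof.
  intros HF Hp u v Hu Hv Huv.
  pose proof (AL_mono eta L u v Huv). pose proof (AL_range eta L u).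
  pose proof (AL_range eta L v). pose proof (HF u v Hu Hv Huv). pose proof (Hp u Hu).
  nra.
Qed.

Lemma pow_le_1 x n : 0 <= x <= 1 -> 0 <= x ^ n <= 1.
Proof.
  intros H; induction n; simpl; [lra|]. split. apply Rmult_le_pos; lra.
  assert (x * x ^ n <= 1 * 1) by (apply Rmult_le_compat; lra). lra.
Qed.

Lemma Qlemma eta : 0 < eta < 1 -> forall k L F,
  Mono (fun _ => false) F -> (forall v, box v -> 0 <= F v) -> NoDup L ->
  (forall i, In i L -> (1 <= i <= k)%nat) ->
  (1 - (1 - eta) ^ (length L)) * intcube k F <= intcube k (fun v => AL eta L v * F v).
Proof.
  intros He. induction k as [|k IH]; intros L F HF Hp Hd HL.
  - destruct L as [|i L]. simpl. rewrite Rminus_diag, Rmult_0_l.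
    unfold AL; simpl. lra.
    exfalso. specialize (HL i (or_introl eq_refl)). lia.
  - rewrite !intcube_S.
    set (Phi := fun t => intcube k (fun v => F (upk v (S k) t))).
    assert (HPhi : ex_RInt Phi 0 1) by (apply (intcube_int k (fun _ => false)); auto).
    assert (HPhiA : ex_RInt (fun t => intcube k (fun v => AL eta L (upk v (S k) t) * F (upk v (S k) t))) 0 1).
    { apply (intcube_int k (fun _ => false) (fun v => AL eta L v * F v)). apply Mono_AL; auto. }
    assert (Hpt : forall t, 0 <= t <= 1 -> Mono (fun _ => false) (fun v => F (upk v (S k) t))).
    { intros; apply Mono_upk; auto. }
    assert (Hpp : forall t, 0 <= t <= 1 -> forall v, box v -> 0 <= F (upk v (S k) t)).
    { intros; apply Hp, box_upk; auto. }
    assert (HPhi0 : forall t, 0 <= t <= 1 -> 0 <= Phi t).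
    { intros t Ht. apply (intcube_nonneg k (fun _ => false)); auto. }
    destruct (in_dec Nat.eq_dec (S k) L) as [Hin|Hnin].
    + set (L' := filter (fun i => negb (Nat.eqb i (S k))) L).
      assert (Hlen : length L = S (length L')) by (apply length_filter; auto).
      set (c := 1 - (1 - eta) ^ length L').
      assert (Hq : 0 <= (1 - eta) ^ length L' <= 1) by (apply pow_le_1; lra).
      assert (Hc : 0 <= c <= 1) by (unfold c; lra).
      set (Psi := fun t => if Rlt_dec t eta then Phi t else 0).
      assert (Hanti : forall s t, 0 <= s -> s <= t -> t <= 1 -> Phi t <= Phi s).
      { intros s0 t0 H1 H2 H3. unfold Phi. apply (intcube_le k (fun _ => false)).
        apply Hpt; lra. apply Hpt; lra.
        intros v Hv. apply (le_upk (fun _ => false)); auto; simpl; lra. }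
      assert (HPsi : ex_RInt Psi 0 1).
      { apply anti_ex. intros s0 t0 H1 H2 H3. unfold Psi.
        destruct (Rlt_dec t0 eta); destruct (Rlt_dec s0 eta); try lra.
        apply Hanti; lra. apply HPhi0; lra. }
      assert (Hkey := key1d Phi eta He Hanti HPhi0).
      assert (Hpw : forall t, 0 <= t <= 1 ->
        c * Phi t + (1 - c) * Psi t <= intcube k (fun v => AL eta L (upk v (S k) t) * F (upk v (S k) t))).
      { intros t Ht. unfold Psi. destruct (Rlt_dec t eta) as [Hlt|Hge].
        - rewrite (intcube_ext k _ (fun v => F (upk v (S k) t))). fold (Phi t). lra.
          intros v. rewrite AL_in_lt; auto. ring.
        - rewrite (intcube_ext k _ (fun v => AL eta L' v * F (upk v (S k) t))).
          assert (c * Phi t <= intcube k (fun v => AL eta L' v * F (upk v (S k) t))).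
          { apply IH; auto. apply NoDup_filter; auto.
            intros i Hi. unfold L' in Hi. apply filter_In in Hi. destruct Hi as [Hi1 Hi2].
            specialize (HL i Hi1). destruct (Nat.eqb_spec i (S k)); simpl in Hi2; [discriminate|]. lia. }
          lra.
          intros v. rewrite AL_in_ge; auto. }
      apply Rle_trans with (Rint (fun t => c * Phi t + (1 - c) * Psi t) 0 1).
      * rewrite Rint_lin by auto. rewrite Hlen. simpl pow.
        assert ((1 - c) * (eta * Rint Phi 0 1) <= (1 - c) * Rint Psi 0 1)
          by (apply Rmult_le_compat_l; [lra|exact Hkey]).
        unfold c in *. set (q := (1 - eta) ^ length L') in *. set (I := Rint Phi 0 1) in *. replace ((1 - (1 - eta) * q) * I) with ((1 - q) * I + (1 - (1 - q)) * (eta * I)) by ring. lra.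
      * apply Rint_le; auto. apply ex_lin; auto.
    + set (c := 1 - (1 - eta) ^ length L).
      assert (Hpw : forall t, 0 <= t <= 1 ->
        c * Phi t <= intcube k (fun v => AL eta L (upk v (S k) t) * F (upk v (S k) t))).
      { intros t Ht. rewrite (intcube_ext k _ (fun v => AL eta L v * F (upk v (S k) t))).
        apply IH; auto. apply NoDup_nil || auto.
        intros i Hi. specialize (HL i Hi). assert (i <> S k) by (intro; subst; tauto). lia.
        intros v; rewrite AL_notin; auto. }
      apply Rle_trans with (Rint (fun t => c * Phi t + 0 * Phi t) 0 1).
      * rewrite Rint_lin by auto. lra.
      * apply Rint_le; auto.
        apply ex_lin; auto. intros t Ht; specialize (Hpw t Ht); lra.
Qed.

Lemma phi_mono (h : R -> R) a b a' b' : admissible h ->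
  0 <= a <= 1 -> 0 <= b <= 1 -> 0 <= a' <= 1 -> 0 <= b' <= 1 -> a' <= a -> b <= b' ->
  0 <= ind_le a b * h (b - a) <= ind_le a' b' * h (b' - a').
Proof.
  intros [H0 [Hm _]] Ha Hb Ha' Hb' H1 H2. unfold ind_le.
  destruct (Rle_dec a b); destruct (Rle_dec a' b'); try lra.
  - assert (0 <= h (b - a)) by (apply H0; lra).
    assert (h (b - a) <= h (b' - a')) by (apply Hm; lra). lra.
  - assert (0 <= h (b' - a')) by (apply H0; lra). lra.
Qed.

Lemma fold_mono (l : list nat) (T T' : nat -> R) :
  (forall i, In i l -> 0 <= T i <= T' i) ->
  0 <= fold_right Rmult 1 (map T l) <= fold_right Rmult 1 (map T' l).
Proof.
  induction l as [|i l IH]; simpl; intros H; [lra|].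
  destruct (H i (or_introl eq_refl)).
  destruct IH as [IH1 IH2]; [intros; apply H; auto|].
  split. apply Rmult_le_pos; lra. apply Rmult_le_compat; lra.
Qed.

Lemma dens_mono n f g x x' Y Y' : sawtooth_fns n f g ->
  box x -> box x' -> box Y -> box Y' -> (forall i, x' i <= x i) -> (forall i, Y i <= Y' i) ->
  0 <= dens n f g x Y <= dens n f g x' Y'.
Proof.
  intros Hs Hx Hx' HY HY' H1 H2. unfold dens. apply fold_mono.
  intros i Hi. apply in_seq in Hi. destruct (Hs i ltac:(lia)) as [Hf Hg].
  pose proof (phi_mono (f i) (x i) (Y i) (x' i) (Y' i) Hf (Hx i) (HY i) (Hx' i) (HY' i) (H1 i) (H2 i)).
  pose proof (phi_mono (g i) (x (S i)) (Y i) (x' (S i)) (Y' i) Hg (Hx (S i)) (HY i) (Hx' (S i)) (HY' i) (H1 (S i)) (H2 i)).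
  split.
  - replace (ind_le (x i) (Y i) * ind_le (x (S i)) (Y i) * f i (Y i - x i) * g i (Y i - x (S i)))
      with ((ind_le (x i) (Y i) * f i (Y i - x i)) * (ind_le (x (S i)) (Y i) * g i (Y i - x (S i)))) by ring.
    apply Rmult_le_pos; lra.
  - replace (ind_le (x i) (Y i) * ind_le (x (S i)) (Y i) * f i (Y i - x i) * g i (Y i - x (S i)))
      with ((ind_le (x i) (Y i) * f i (Y i - x i)) * (ind_le (x (S i)) (Y i) * g i (Y i - x (S i)))) by ring.
    replace (ind_le (x' i) (Y' i) * ind_le (x' (S i)) (Y' i) * f i (Y' i - x' i) * g i (Y' i - x' (S i)))
      with ((ind_le (x' i) (Y' i) * f i (Y' i - x' i)) * (ind_le (x' (S i)) (Y' i) * g i (Y' i - x' (S i)))) by ring.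
    apply Rmult_le_compat; lra.
Qed.

Lemma box_upd w j y : box w -> 0 <= y <= 1 -> box (upd w j y).
Proof. intros Hw Hy i; unfold upd; destruct (Nat.eqb i j); auto. Qed.

Theorem mainTheorem13 (eta eps : R) :
  0 < eta < 1 -> 0 < eps ->
  exists N0 : nat,
    forall (n : nat) (f g : nat -> R -> R),
      (N0 + 4 <= n)%nat -> sawtooth_fns n f g ->
      forall (r : nat), (2 <= r)%nat -> (r <= n - N0)%nat ->
      forall y : R, 0 <= y <= 1 ->
        0 < cond_den n f g (r + N0) y ->
        cond_prob n f g (r + N0) y (some_below eta r N0) >= 1 - eps.
Proof.
  intros He Heps.
  destruct (pow_lt_1_zero (1 - eta) ltac:(rewrite Rabs_right; lra) eps Heps) as [N HN].
  exists N. intros n f g Hn Hs r Hr1 Hr2 y Hy Hden.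
  set (j := (r + N)%nat) in *.
  set (H := fun x => intcube n (fun w => dens n f g x (upd w j y))).
  set (L := seq r (S N)).
  assert (Hci : cond_int n f g j y (some_below eta r N) = intcube (n + 1) (fun x => AL eta L x * H x)).
  { unfold cond_int. apply intcube_ext. intros x. unfold H.
    change (some_below eta r N x) with (AL eta L x). unfold AL.
    destruct existsb.
    - rewrite (intcube_ext n _ (fun w => dens n f g x (upd w j y))); [ring|]. intros; ring.
    - rewrite (intcube_ext n _ (fun _ => 0)). rewrite intcube_zero; ring. intros; ring. }
  assert (Hcd : cond_den n f g j y = intcube (n + 1) H).
  { unfold cond_den, cond_int. apply intcube_ext. intros x. unfold H.
    apply intcube_ext. intros; ring. }
  assert (HW : forall x, box x -> Mono (fun _ => true) (fun w => dens n f g x (upd w j y))).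
  { intros x Hx u v Hu Hv Huv. apply (dens_mono n f g x x); auto; try apply box_upd; auto.
    intros; lra. intros i. unfold upd. destruct (Nat.eqb i j); [lra|]. apply (Huv i). }
  assert (HM : Mono (fun _ => false) H).
  { intros u v Hu Hv Huv. unfold H. apply (intcube_le n (fun _ => true)); auto.
    intros w Hw. apply (dens_mono n f g u v); auto; try apply box_upd; auto.
    all: intros i; first [apply (Huv i) | lra]. }
  assert (HP : forall x, box x -> 0 <= H x).
  { intros x Hx. unfold H. apply (intcube_nonneg n (fun _ => true)); auto.
    intros w Hw. apply (dens_mono n f g x x (upd w j y) (upd w j y)); auto; try apply box_upd; auto; intros; lra. }
  assert (HQ := Qlemma eta He (n + 1) L H HM HP (seq_NoDup _ _)
                 ltac:(intros i Hi; unfold L in Hi; apply in_seq in Hi; lia)).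
  unfold L in HQ. rewrite seq_length in HQ.
  specialize (HN (S N) ltac:(lia)). rewrite Rabs_right in HN by (apply Rle_ge, pow_le; lra).
  unfold cond_prob. rewrite Hci. rewrite Hcd in Hden |- *.
  fold L in HQ.
  apply Rle_ge. apply Rle_trans with (1 - (1 - eta) ^ S N); [lra|].
  apply Rmult_le_reg_r with (intcube (n + 1) H); auto.
  unfold Rdiv. rewrite Rmult_assoc, Rinv_l, Rmult_1_r by lra. exact HQ.
Qed.
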